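(* For every $t\in\mathtt T_J$: $t$ is strongly normalizing for $\to_{d\beta}$ if and only if $t$ is strongly normalizing for $\to_\beta\cup\to_\pi$.
   Context: Terms $\mathtt T_J$: $t,u,r ::= x \mid \lambda x.t \mid t(u,y.r)$ ($y$ bound in $r$), up to $\alpha$-equivalence; $\{u/x\}t$ capture-avoiding substitution. List contexts $\mathtt D ::= \Diamond \mid t(u,y.\mathtt D)$. Distant beta: $\mathtt D\langle\lambda x.t\rangle(u,y.r) \mapsto_{d\beta} \{\{u/x\}\mathtt D\langle t\rangle/y\}r$ (variables bound by $\mathtt D$ not free in $u$, $x$ not in $\mathtt D$). Rules of $\Lambda J$: $\beta$: $(\lambda x.t)(u,y.r)\mapsto\{\{u/x\}t/y\}r$; $\pi$: $t(u,x.r)(u',y.r')\mapsto t(u,x.r(u',y.r'))$ (with $x\notin\mathrm{fv}(u')\cup\mathrm{fv}(r')$). Each of $\to_{d\beta},\to_\beta,\to_\pi$ is the closure of the corresponding rule under all term contexts. A term is strongly normalizing for a relation if it admits no infinite reduction sequence. *)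

(* Defs.v *)
(* Terms of Lambda-J up to alpha-equivalence, represented with
   de Bruijn indices (which are canonical representatives of alpha-classes). *)
From Stdlib Require Import Arith List.
Import ListNotations.

(* t ::= x | \x.t | t(u, y.r)   -- in [App t u r], [r] binds one variable (index 0) *)
Inductive term : Type :=
| Var : nat -> term
| Lam : term -> term
| App : term -> term -> term -> term.

Fixpoint lift (k c : nat) (t : term) : term :=
  match t with
  | Var n => if n <? c then Var n else Var (n + k)
  | Lam b => Lam (lift k (S c) b)
  | App a u r => App (lift k c a) (lift k c u) (lift k (S c) r)
  end.

Fixpoint substAt (c : nat) (s : term) (t : term) : term :=
  match t with
  | Var n => if n <? c then Var n
             else if n =? c then lift c 0 s
             else Var (n - 1)
  | Lam b => Lam (substAt (S c) s b)
  | App a u r => App (substAt c s a) (substAt c s u) (substAt (S c) s r)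
  end.

Definition subst0 (s t : term) : term := substAt 0 s t.

(* list contexts D ::= <> | t(u, y.D), as the list of pairs (t,u) from outside in *)
Definition lctx := list (term * term).

Fixpoint plug (D : lctx) (s : term) : term :=
  match D with
  | [] => s
  | (a, u) :: D' => App a u (plug D' s)
  end.

(* distant beta: D<\x.t>(u, y.r) -> {{u/x} D<t> / y} r ; u is lifted under the
   binders of D (the named side condition that D's bound vars are not free in u) *)
Inductive dbeta_root : term -> term -> Prop :=
| dbeta_rule : forall D t u r,
    dbeta_root (App (plug D (Lam t)) u r)
               (subst0 (plug D (subst0 (lift (length D) 0 u) t)) r).

Inductive beta_root : term -> term -> Prop :=
| beta_rule : forall t u r,
    beta_root (App (Lam t) u r) (subst0 (subst0 u t) r).

(* pi: t(u, x.r)(u', y.r') -> t(u, x. r(u', y.r')) ; x not free in u', r' *)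
Inductive pi_root : term -> term -> Prop :=
| pi_rule : forall t u r u' r',
    pi_root (App (App t u r) u' r')
            (App t u (App r (lift 1 0 u') (lift 1 1 r'))).

Inductive ctx_closure (R : term -> term -> Prop) : term -> term -> Prop :=
| cc_root : forall a b, R a b -> ctx_closure R a b
| cc_lam : forall a b, ctx_closure R a b -> ctx_closure R (Lam a) (Lam b)
| cc_app1 : forall a b u r, ctx_closure R a b -> ctx_closure R (App a u r) (App b u r)
| cc_app2 : forall t a b r, ctx_closure R a b -> ctx_closure R (App t a r) (App t b r)
| cc_app3 : forall t u a b, ctx_closure R a b -> ctx_closure R (App t u a) (App t u b).

Definition dbeta_step := ctx_closure dbeta_root.
Definition beta_step := ctx_closure beta_root.
Definition pi_step := ctx_closure pi_root.

Definition union_rel (R S : term -> term -> Prop) : term -> term -> Prop :=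
  fun a b => R a b \/ S a b.

Definition SN (R : term -> term -> Prop) (t : term) : Prop :=
  ~ (exists f : nat -> term, f 0 = t /\ forall n, R (f n) (f (S n))).

(* Main.v *)
Require Import Defs.
From Stdlib Require Import Arith Lia List Permutation FunctionalExtensionality ClassicalEpsilon Classical Relations Wellfounded.
Import ListNotations.

Inductive ty : Type := TA : ty | TArr : list ty -> ty -> ty.

Definition ty_eq_dec (x y : ty) : {x = y} + {x <> y} := excluded_middle_informative (x = y).

Definition ctx := nat -> list ty.
Definition cempty : ctx := fun _ => [].
Definition cadd (G H : ctx) : ctx := fun i => G i ++ H i.
Definition csing (x : nat) (s : ty) : ctx := fun i => if i =? x then [s] else [].
Definition cdn (G : ctx) : ctx := fun i => G (S i).
Definition cdnc (c : nat) (G : ctx) : ctx := fun i => if i <? c then G i else G (S i).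
Definition clift (k c : nat) (G : ctx) : ctx :=
  fun i => if i <? c then G i else if i <? c + k then [] else G (i - k).
Definition cz (J : list ty) : ctx := fun i => if i =? 0 then J else [].
Definition ceq (G H : ctx) := forall i, Permutation (G i) (H i).
Definition csub (G H : ctx) := exists K, ceq (cadd G K) H.
Definition subm (L L' : list ty) := exists K, Permutation (L ++ K) L'.

Ltac pcount :=
  repeat match goal with
  | H : Permutation _ _ |- _ =>
      let H' := fresh "HC" in
      pose proof (proj1 (Permutation_count_occ ty_eq_dec _ _) H) as H'; clear H
  end;
  apply (proj2 (Permutation_count_occ ty_eq_dec _ _));
  let z := fresh "z" in intro z;
  repeat match goal with
  | H : forall x : ty, _ |- _ => specialize (H z)
  end;
  repeat rewrite count_occ_app in *; lia.

Lemma perm_test (a b c d : list ty) : Permutation a (b ++ c) -> Permutation (d ++ a) (c ++ d ++ b).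
Proof. intros. pcount. Qed.

Ltac cunf := unfold ceq, cadd, cempty, cdn in *; let i := fresh "i" in intro i;
  repeat match goal with
  | H : forall j : nat, Permutation _ _ |- _ => specialize (H i)
  end.

Lemma ceq_refl G : ceq G G. Proof. intro; apply Permutation_refl. Qed.
Lemma ceq_sym G H : ceq G H -> ceq H G. Proof. intros E i; apply Permutation_sym, E. Qed.
Lemma ceq_trans G H I : ceq G H -> ceq H I -> ceq G I.
Proof. intros E F i; eapply perm_trans; [apply E|apply F]. Qed.

Lemma csub_refl G : csub G G.
Proof. exists cempty. cunf. rewrite app_nil_r. apply Permutation_refl. Qed.
Lemma csub_trans G H I : csub G H -> csub H I -> csub G I.
Proof. intros [K1 E1] [K2 E2]. exists (cadd K1 K2). cunf. pcount. Qed.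
Lemma csub_ceq G H : ceq G H -> csub G H.
Proof. intros E; exists cempty; cunf; rewrite app_nil_r; auto. Qed.
Lemma csub_addr G K : csub G (cadd G K).
Proof. exists K; apply ceq_refl. Qed.
Lemma csub_addl G K : csub G (cadd K G).
Proof. exists K; cunf; pcount. Qed.
Lemma csub_add G H G' H' : csub G G' -> csub H H' -> csub (cadd G H) (cadd G' H').
Proof. intros [K1 E1] [K2 E2]; exists (cadd K1 K2); cunf; pcount. Qed.
Lemma csub_ceq_r G H H' : csub G H -> ceq H H' -> csub G H'.
Proof. intros S E; eapply csub_trans; [exact S| apply csub_ceq; exact E]. Qed.

Lemma ceq_add G H G' H' : ceq G G' -> ceq H H' -> ceq (cadd G H) (cadd G' H').
Proof. intros; cunf; pcount. Qed.
Lemma ceq_addC G H : ceq (cadd G H) (cadd H G). Proof. cunf; pcount. Qed.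
Lemma ceq_addA G H I : ceq (cadd G (cadd H I)) (cadd (cadd G H) I). Proof. cunf; pcount. Qed.

Lemma cadd_empty_l G : cadd cempty G = G. Proof. reflexivity. Qed.
Lemma cadd_empty_r G : cadd G cempty = G.
Proof. apply functional_extensionality; intro i; unfold cadd, cempty; apply app_nil_r. Qed.

Lemma ceq_empty G : ceq cempty G -> G = cempty.
Proof. intros E; apply functional_extensionality; intro i; specialize (E i).
  unfold cempty in *; apply Permutation_nil; auto. Qed.
Definition arr (p : list ty * ty) : ty := TArr (fst p) (snd p).
Definition app_ok (A B Y : list ty) : Prop :=
  (Y <> [] /\ exists ps, Permutation (map snd ps) Y /\ Permutation A (map arr ps) /\
     ((concat (map fst ps) <> [] /\ Permutation B (concat (map fst ps))) \/
      (concat (map fst ps) = [] /\ length B = 1)))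
  \/ (Y = [] /\ length A = 1 /\ length B = 1).

Inductive tj : ctx -> term -> ty -> nat -> Prop :=
| tj_var x s : tj (csing x s) (Var x) s 1
| tj_lam G t s M n : tj G t s n -> Permutation M (G 0) -> tj (cdn G) (Lam t) (TArr M s) (S n)
| tj_app G1 G2 G3 t u r A B s n1 n2 n3 :
    tjs G1 t A n1 -> tjs G2 u B n2 -> tj G3 r s n3 -> app_ok A B (G3 0) ->
    tj (cadd G1 (cadd G2 (cdn G3))) (App t u r) s (S (n1+n2+n3))
| tj_weak G G' t s n : tj G t s n -> csub G G' -> tj G' t s n
with tjs : ctx -> term -> list ty -> nat -> Prop :=
| tjs_nil t : tjs cempty t [] 0
| tjs_cons G G1 G2 t s A n1 n2 : tj G1 t s n1 -> tjs G2 t A n2 -> ceq (cadd G1 G2) G ->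
    tjs G t (s::A) (n1+n2).

Scheme tj_ind2 := Induction for tj Sort Prop with tjs_ind2 := Induction for tjs Sort Prop.
Combined Scheme tj_mut from tj_ind2, tjs_ind2.

Lemma app_ok_perm A B Y A' B' Y' : app_ok A B Y -> Permutation A A' -> Permutation B B' ->
  Permutation Y Y' -> app_ok A' B' Y'.
Proof.
  intros [[HY [ps [H1 [H2 H3]]]]|[HY [HA HB]]] PA PB PY.
  - left. split.
    + intro E; subst; apply Permutation_sym, Permutation_nil in PY; auto.
    + exists ps; split; [eapply perm_trans; eauto|]. split; [eapply perm_trans; [apply Permutation_sym; eauto|eauto]|].
      destruct H3 as [[? ?]|[? ?]]; [left; split; auto; eapply perm_trans; [apply Permutation_sym; eauto|eauto]|right; split; auto].
      rewrite <- (Permutation_length PB); auto.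
  - right. subst. apply Permutation_nil in PY. subst. split; auto.
    rewrite <- (Permutation_length PA), <- (Permutation_length PB); auto.
Qed.

Lemma app_ok_ne A B Y : app_ok A B Y -> A <> [] /\ B <> [].
Proof.
  intros [[HY [ps [H1 [H2 H3]]]]|[HY [HA HB]]].
  - assert (ps <> []) by (intro; subst; simpl in H1; apply Permutation_nil in H1; auto).
    split.
    + intro; subst. apply Permutation_nil in H2. destruct ps; simpl in *; congruence.
    + destruct H3 as [[? ?]|[? ?]]; intro; subst.
      * apply Permutation_nil in H3; auto.
      * simpl in *; lia.
  - split; intro; subst; simpl in *; lia.
Qed.

Lemma tjs_n G t A n m : tjs G t A n -> n = m -> tjs G t A m.
Proof. intros; subst; auto. Qed.
Lemma tj_n G t s n m : tj G t s n -> n = m -> tj G t s m.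
Proof. intros; subst; auto. Qed.

Lemma tj_ceq G G' t s n : tj G t s n -> ceq G G' -> tj G' t s n.
Proof. intros H E; eapply tj_weak; [exact H| apply csub_ceq; auto]. Qed.

Lemma tjs_ceq G G' t A n : tjs G t A n -> ceq G G' -> tjs G' t A n.
Proof.
  intros H E; destruct H.
  - apply ceq_empty in E; subst; constructor.
  - eapply tjs_cons; eauto. eapply ceq_trans; eauto.
Qed.

Lemma tjs_nil_inv G t n : tjs G t [] n -> G = cempty /\ n = 0.
Proof. intros H; inversion H; auto. Qed.

Lemma tjs_cons_inv G t s A n : tjs G t (s::A) n ->
  exists G1 G2 n1 n2, tj G1 t s n1 /\ tjs G2 t A n2 /\ ceq (cadd G1 G2) G /\ n = n1 + n2.
Proof. intros H; inversion H; subst; do 4 eexists; eauto. Qed.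

Lemma tjs_single G t s n : tj G t s n -> tjs G t [s] n.
Proof. intros H. eapply tjs_n. eapply tjs_cons; [exact H| constructor|].
  rewrite cadd_empty_r; apply ceq_refl. lia. Qed.

Lemma tjs_single_inv G t s n : tjs G t [s] n -> tj G t s n.
Proof. intros H; apply tjs_cons_inv in H as (G1&G2&n1&n2&H1&H2&E&->).
  apply tjs_nil_inv in H2 as [-> ->]. rewrite cadd_empty_r in E. eapply tj_n; [eapply tj_ceq; eauto|lia]. Qed.

Lemma tjs_app G1 G2 t A1 A2 n1 n2 : tjs G1 t A1 n1 -> tjs G2 t A2 n2 -> tjs (cadd G1 G2) t (A1++A2) (n1+n2).
Proof.
  revert G1 n1; induction A1 as [|s A1 IH]; intros G1 n1 H1 H2.
  - apply tjs_nil_inv in H1 as [-> ->]; simpl; auto.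
  - apply tjs_cons_inv in H1 as (Ga&Gb&na&nb&Ha&Hb&E&->).
    simpl. eapply tjs_n. eapply tjs_cons; [exact Ha| apply (IH _ _ Hb H2)|].
    + apply ceq_trans with (cadd (cadd Ga Gb) G2); [apply ceq_addA| apply ceq_add; auto; apply ceq_refl].
    + lia.
Qed.

Lemma tjs_split G t A1 A2 n : tjs G t (A1++A2) n ->
  exists G1 G2 n1 n2, tjs G1 t A1 n1 /\ tjs G2 t A2 n2 /\ ceq (cadd G1 G2) G /\ n = n1 + n2.
Proof.
  revert G n; induction A1 as [|s A1 IH]; intros G n H.
  - exists cempty, G, 0, n. repeat split; auto. constructor. apply ceq_refl.
  - simpl in H. apply tjs_cons_inv in H as (Ga&Gb&na&nb&Ha&Hb&E&->).
    apply IH in Hb as (G1&G2&n1&n2&H1&H2&E2&->).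
    exists (cadd Ga G1), G2, (na+n1), n2. repeat split.
    + eapply tjs_cons; eauto. apply ceq_refl.
    + auto.
    + eapply ceq_trans; [|exact E]. eapply ceq_trans; [apply ceq_sym, ceq_addA|]. apply ceq_add; auto. apply ceq_refl.
    + lia.
Qed.

Lemma tjs_perm G t A A' n : tjs G t A n -> Permutation A A' -> tjs G t A' n.
Proof.
  intros H P; revert G n H; induction P; intros G n H.
  - auto.
  - apply tjs_cons_inv in H as (Ga&Gb&na&nb&Ha&Hb&E&->). eapply tjs_cons; eauto.
  - apply tjs_cons_inv in H as (Ga&Gb&na&nb&Ha&Hb&E&->).
    apply tjs_cons_inv in Hb as (Gc&Gd&nc&nd&Hc&Hd&E2&->).
    eapply tjs_n. eapply tjs_cons; [exact Hc| eapply tjs_cons; [exact Ha|exact Hd|apply ceq_refl]|].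
    + cunf. pcount.
    + lia.
  - eauto.
Qed.

Lemma tjs_sub G t A A' n : tjs G t A n -> subm A' A -> exists G' n', tjs G' t A' n' /\ csub G' G /\ n' <= n.
Proof.
  intros H [K P]. apply tjs_perm with (A' := A' ++ K) in H; [|apply Permutation_sym; auto].
  apply tjs_split in H as (G1&G2&n1&n2&H1&H2&E&->). exists G1, n1; repeat split; auto; [|lia].
  exists G2; auto.
Qed.

Lemma tjs_in G t A n s : tjs G t A n -> In s A -> exists G' n', tj G' t s n'.
Proof.
  intros H Hin; apply in_split in Hin as (l1&l2&->).
  apply tjs_split in H as (G1&G2&n1&n2&H1&H2&E&->).
  apply tjs_cons_inv in H2 as (Ga&Gb&na&nb&Ha&_). eauto.
Qed.

Lemma tjs_typable G t A n : tjs G t A n -> A <> [] -> exists G' s n', tj G' t s n'.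
Proof. intros H NE; destruct A as [|s A]; [congruence|]. apply tjs_in with (s:=s) in H as (?&?&?); [eauto|left; auto]. Qed.

Lemma inv_var G x s n : tj G (Var x) s n -> n = 1 /\ csub (csing x s) G.
Proof.
  intros H; remember (Var x) as t; induction H; try discriminate.
  - injection Heqt; intros; subst; split; auto; apply csub_refl.
  - destruct (IHtj Heqt) as [? ?]; split; auto; eapply csub_trans; eauto.
Qed.

Lemma inv_lam G t T n : tj G (Lam t) T n -> exists G0 M s n0, T = TArr M s /\ n = S n0 /\
  tj G0 t s n0 /\ Permutation M (G0 0) /\ csub (cdn G0) G.
Proof.
  intros H; remember (Lam t) as t0; induction H; try discriminate.
  - injection Heqt0; intros; subst. do 4 eexists; repeat split; eauto. apply csub_refl.
  - destruct (IHtj Heqt0) as (G0&M&s0&n0&?&?&?&?&?). do 4 eexists; repeat split; eauto.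
    eapply csub_trans; eauto.
Qed.

Lemma inv_app G t u r s n : tj G (App t u r) s n -> exists G1 G2 G3 A B n1 n2 n3,
  tjs G1 t A n1 /\ tjs G2 u B n2 /\ tj G3 r s n3 /\ app_ok A B (G3 0) /\ n = S (n1+n2+n3) /\
  csub (cadd G1 (cadd G2 (cdn G3))) G.
Proof.
  intros H; remember (App t u r) as t0; induction H; try discriminate.
  - injection Heqt0; intros; subst. do 8 eexists; repeat split; eauto. apply csub_refl.
  - destruct (IHtj Heqt0) as (G1&G2&G3&A&B&n1&n2&n3&?&?&?&?&?&?). do 8 eexists; repeat split; eauto.
    eapply csub_trans; eauto.
Qed.
Ltac ctxext := apply functional_extensionality; let i := fresh "i" in intro i;
  unfold cadd, csing, cdn, cdnc, clift, cz, cempty;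
  repeat match goal with
   | |- context [?a <? ?b] => destruct (Nat.ltb_spec a b)
   | |- context [?a =? ?b] => destruct (Nat.eqb_spec a b)
  end; try (exfalso; lia); try reflexivity; try (f_equal; lia); try (subst; reflexivity).

Lemma clift_csing k c x s : clift k c (csing x s) = csing (if x <? c then x else x + k) s.
Proof. destruct (Nat.ltb_spec x c); ctxext. Qed.
Lemma clift_cadd k c G H : clift k c (cadd G H) = cadd (clift k c G) (clift k c H).
Proof. ctxext. Qed.
Lemma cdn_clift k c G : cdn (clift k (S c) G) = clift k c (cdn G).
Proof. ctxext. Qed.
Lemma clift_cempty k c : clift k c cempty = cempty.
Proof. ctxext. Qed.
Lemma cdnc_csing_eq c s : cdnc c (csing c s) = cempty.
Proof. ctxext. Qed.
Lemma cdnc_csing_lt c x s : x < c -> cdnc c (csing x s) = csing x s.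
Proof. intros; ctxext. Qed.
Lemma cdnc_csing_gt c x s : c < x -> cdnc c (csing x s) = csing (x - 1) s.
Proof. intros; ctxext. Qed.
Lemma cdn_cdnc c G : cdn (cdnc (S c) G) = cdnc c (cdn G).
Proof. ctxext. Qed.
Lemma cdn_clift0 c D : cdn (clift (S c) 0 D) = clift c 0 D.
Proof. ctxext. Qed.
Lemma clift00 D : clift 0 0 D = D.
Proof. ctxext. Qed.
Lemma cdnc0 G : cdnc 0 G = cdn G.
Proof. ctxext. Qed.
Lemma cdnc_cadd c G H : cdnc c (cadd G H) = cadd (cdnc c G) (cdnc c H).
Proof. ctxext. Qed.
Lemma cdnc_cempty c : cdnc c cempty = cempty.
Proof. ctxext. Qed.
Lemma cdn_cz J : cdn (cz J) = cempty.
Proof. ctxext. Qed.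
Lemma cdnc_cz c J : cdnc (S c) (cz J) = cz J.
Proof. ctxext. Qed.
Lemma cdn_clift10 D : cdn (clift 1 0 D) = D.
Proof. ctxext. Qed.
Lemma cdn_cdn_clift11 D : cdn (cdn (clift 1 1 D)) = cdn D.
Proof. ctxext. Qed.

Lemma ceq_clift k c G H : ceq G H -> ceq (clift k c G) (clift k c H).
Proof. intros E i; unfold clift; destruct (i <? c); [apply E|destruct (i <? c + k); auto]. Qed.
Lemma ceq_cdnc c G H : ceq G H -> ceq (cdnc c G) (cdnc c H).
Proof. intros E i; unfold cdnc; destruct (i <? c); apply E. Qed.
Lemma ceq_cdn G H : ceq G H -> ceq (cdn G) (cdn H).
Proof. intros E i; apply E. Qed.
Lemma csub_clift k c G H : csub G H -> csub (clift k c G) (clift k c H).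
Proof. intros [K E]; exists (clift k c K); rewrite <- clift_cadd; apply ceq_clift; auto. Qed.
Lemma csub_cdnc c G H : csub G H -> csub (cdnc c G) (cdnc c H).
Proof. intros [K E]; exists (cdnc c K); rewrite <- cdnc_cadd; apply ceq_cdnc; auto. Qed.
Lemma csub_cdn G H : csub G H -> csub (cdn G) (cdn H).
Proof. intros [K E]; exists (cdn K); apply ceq_cdn in E; auto. Qed.
Lemma csub_at G H i : csub G H -> subm (G i) (H i).
Proof. intros [K E]; exists (K i); apply E. Qed.

Lemma lift_typ : (forall G t s n, tj G t s n -> forall k c, tj (clift k c G) (lift k c t) s n) /\
                 (forall G t A n, tjs G t A n -> forall k c, tjs (clift k c G) (lift k c t) A n).
Proof.
  apply tj_mut; intros.
  - simpl. rewrite clift_csing. destruct (x <? c); constructor.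
  - simpl. rewrite <- cdn_clift. apply tj_lam; auto.
  - simpl. rewrite !clift_cadd, <- cdn_clift. apply tj_app with (A:=A) (B:=B); auto.
  - eapply tj_weak; eauto. apply csub_clift; auto.
  - rewrite clift_cempty. constructor.
  - eapply tjs_cons; eauto. rewrite <- clift_cadd. apply ceq_clift; auto.
Qed.
Lemma cdn_cadd G H : cdn (cadd G H) = cadd (cdn G) (cdn H).
Proof. reflexivity. Qed.

Lemma subst_typ :
  (forall G t s n, tj G t s n -> forall c X D m, tjs D X (G c) m ->
     exists n', n' <= n + m /\ tj (cadd (cdnc c G) (clift c 0 D)) (substAt c X t) s n') /\
  (forall G t A n, tjs G t A n -> forall c X D m, tjs D X (G c) m ->
     exists n', n' <= n + m /\ tjs (cadd (cdnc c G) (clift c 0 D)) (substAt c X t) A n').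
Proof.
  apply tj_mut; intros.
  -
    simpl. unfold csing at 1 in H.
    destruct (Nat.ltb_spec x c).
    + destruct (Nat.eqb_spec c x); [lia|]. apply tjs_nil_inv in H as [-> ->].
      rewrite cdnc_csing_lt, clift_cempty, cadd_empty_r by auto. exists 1; split; [lia|constructor].
    + destruct (Nat.eqb_spec x c).
      * subst. rewrite Nat.eqb_refl in H. apply tjs_single_inv in H.
        rewrite cdnc_csing_eq, cadd_empty_l. exists m; split; [lia|]. apply lift_typ; auto.
      * destruct (Nat.eqb_spec c x); [lia|]. apply tjs_nil_inv in H as [-> ->].
        rewrite cdnc_csing_gt, clift_cempty, cadd_empty_r by lia. exists 1; split; [lia|constructor].
  -
    simpl. destruct (H (S c) X D m H0) as (n'&Hle&Ht).
    exists (S n'); split; [lia|].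
    replace (cadd (cdnc c (cdn G)) (clift c 0 D)) with (cdn (cadd (cdnc (S c) G) (clift (S c) 0 D)))
      by (rewrite cdn_cadd, cdn_cdnc, cdn_clift0; reflexivity).
    apply tj_lam; auto. cbn. rewrite app_nil_r. auto.
  -
    rename H into IHt, H0 into IHu, H1 into IHr, H2 into HD.
    simpl. unfold cadd at 1 in HD. unfold cadd at 1 in HD. unfold cdn at 1 in HD.
    apply tjs_split in HD as (D1&D'&m1&m'&HD1&HD2&E1&->).
    apply tjs_split in HD2 as (D2&D3&m2&m3&HD2&HD3&E2&->).
    destruct (IHt c X D1 m1 HD1) as (k1&L1&T1).
    destruct (IHu c X D2 m2 HD2) as (k2&L2&T2).
    destruct (IHr (S c) X D3 m3 HD3) as (k3&L3&T3).
    exists (S (k1+k2+k3)); split; [lia|].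
    eapply tj_ceq. apply tj_app with (A:=A) (B:=B); eauto.
    + eapply app_ok_perm; eauto. cbn. rewrite app_nil_r. apply Permutation_refl.
    + rewrite !cdnc_cadd, cdn_cadd, cdn_cdnc, cdn_clift0.
      assert (E : ceq (cadd D1 (cadd D2 D3)) D) by (eapply ceq_trans; [|exact E1]; apply ceq_add; auto; apply ceq_refl).
      apply (ceq_clift c 0) in E. rewrite !clift_cadd in E.
      cunf. pcount.
  -
    rename c into Hs, c0 into c.
    destruct (tjs_sub _ _ _ _ _ H0 (csub_at _ _ c Hs)) as (D'&m'&HD&SD&Le).
    destruct (H c X D' m' HD) as (n'&Ln&T).
    exists n'; split; [lia|]. eapply tj_weak; [exact T|].
    apply csub_add; [apply csub_cdnc; auto| apply csub_clift; auto].
  -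
    apply tjs_nil_inv in H as [-> ->]. rewrite cdnc_cempty, clift_cempty. exists 0; split; [lia|constructor].
  -
    rename c into Ec, c0 into c, H1 into H1c. rename Ec into c0, H1c into H1.
    apply tjs_perm with (A' := G1 c ++ G2 c) in H1; [|apply Permutation_sym; apply c0].
    apply tjs_split in H1 as (Da&Db&ma&mb&Ha&Hb&E&->).
    destruct (H c X Da ma Ha) as (k1&L1&T1).
    destruct (H0 c X Db mb Hb) as (k2&L2&T2).
    exists (k1+k2); split; [lia|]. eapply tjs_cons; eauto.
    apply (ceq_cdnc c) in c0. rewrite cdnc_cadd in c0.
    apply (ceq_clift c 0) in E. rewrite clift_cadd in E.
    cunf. pcount.
Qed.
Lemma subm_J L Y : subm L Y -> exists J, Permutation (L ++ J) Y.
Proof. auto. Qed.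

Lemma cadd_cz0 G J : cadd G (cz J) 0 = G 0 ++ J.
Proof. reflexivity. Qed.
Lemma cadd_czS G J c : cadd G (cz J) (S c) = G (S c).
Proof. unfold cadd, cz; simpl; apply app_nil_r. Qed.
Lemma cdn_cadd_cz G J : cdn (cadd G (cz J)) = cdn G.
Proof. rewrite cdn_cadd, cdn_cz, cadd_empty_r; auto. Qed.
Lemma cdnc_cadd_cz c G J : cdnc (S c) (cadd G (cz J)) = cadd (cdnc (S c) G) (cz J).
Proof. rewrite cdnc_cadd, cdnc_cz; auto. Qed.

Lemma tj_addcz G J t s n : tj G t s n -> tj (cadd G (cz J)) t s n.
Proof. intros H; eapply tj_weak; [exact H|apply csub_addr]. Qed.

Lemma anti_lift_tjs_of k c t :
  (forall G s n, tj G (lift k c t) s n -> exists G0, tj G0 t s n /\ csub (clift k c G0) G) ->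
  forall A G n, tjs G (lift k c t) A n -> exists G0, tjs G0 t A n /\ csub (clift k c G0) G.
Proof.
  intros IH A; induction A as [|s A IHA]; intros G n H.
  - apply tjs_nil_inv in H as [-> ->]. exists cempty; split; [constructor|]. rewrite clift_cempty; apply csub_refl.
  - apply tjs_cons_inv in H as (G1&G2&n1&n2&H1&H2&E&->).
    destruct (IH _ _ _ H1) as (Ga&Ta&Sa). destruct (IHA _ _ H2) as (Gb&Tb&Sb).
    exists (cadd Ga Gb); split; [eapply tjs_cons; eauto; apply ceq_refl|].
    rewrite clift_cadd. eapply csub_ceq_r; [apply csub_add; eauto|auto].
Qed.

Lemma anti_lift : forall t k c G s n, tj G (lift k c t) s n -> exists G0, tj G0 t s n /\ csub (clift k c G0) G.
Proof.
  induction t as [x|t IH|t IHt u IHu r IHr]; intros k c G s n H.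
  - simpl in H. exists (csing x s); split; [|rewrite clift_csing]; destruct (x <? c);
      apply inv_var in H as [-> Hs]; auto; constructor.
  - simpl in H. apply inv_lam in H as (G1&M&s0&n0&->&->&H1&P&Sd).
    destruct (IH _ _ _ _ _ H1) as (G0&T0&S0).
    pose proof (csub_at _ _ 0 S0) as Sub. cbn in Sub. destruct Sub as [J PJ].
    exists (cdn (cadd G0 (cz J))); split.
    + apply tj_lam; [apply tj_addcz; auto|]. rewrite cadd_cz0. eapply perm_trans; [exact P|apply Permutation_sym; auto].
    + rewrite cdn_cadd_cz, <- cdn_clift. eapply csub_trans; [apply csub_cdn; exact S0|auto].
  - simpl in H. apply inv_app in H as (G1&G2&G3&A&B&n1&n2&n3&H1&H2&H3&Ok&->&Sd).
    destruct (anti_lift_tjs_of _ _ _ (IHt k c) _ _ _ H1) as (Ga&Ta&Sa).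
    destruct (anti_lift_tjs_of _ _ _ (IHu k c) _ _ _ H2) as (Gb&Tb&Sb).
    destruct (IHr _ _ _ _ _ H3) as (Gr&Tr&Sr).
    pose proof (csub_at _ _ 0 Sr) as Sub. cbn in Sub. destruct Sub as [J PJ].
    exists (cadd Ga (cadd Gb (cdn (cadd Gr (cz J))))); split.
    + apply tj_app with (A:=A) (B:=B); auto. apply tj_addcz; auto.
      eapply app_ok_perm; eauto; try apply Permutation_refl. rewrite cadd_cz0; apply Permutation_sym; auto.
    + rewrite cdn_cadd_cz, !clift_cadd, <- cdn_clift. eapply csub_trans; [|exact Sd].
      apply csub_add; auto. apply csub_add; auto. apply csub_cdn; auto.
Qed.

Lemma anti_lift_tjs k c t A G n : tjs G (lift k c t) A n -> exists G0, tjs G0 t A n /\ csub (clift k c G0) G.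
Proof. apply anti_lift_tjs_of. intros; eapply anti_lift; eauto. Qed.

Lemma anti_subst_tjs_of c X t :
  (forall G s n, tj G (substAt c X t) s n -> exists Gt D nt m, tj Gt t s nt /\ tjs D X (Gt c) m /\
      csub (cadd (cdnc c Gt) (clift c 0 D)) G) ->
  forall A G n, tjs G (substAt c X t) A n -> exists Gt D nt m, tjs Gt t A nt /\ tjs D X (Gt c) m /\
      csub (cadd (cdnc c Gt) (clift c 0 D)) G.
Proof.
  intros IH A; induction A as [|s A IHA]; intros G n H.
  - apply tjs_nil_inv in H as [-> ->]. exists cempty, cempty, 0, 0; repeat split; try constructor.
    rewrite cdnc_cempty, clift_cempty. apply csub_refl.
  - apply tjs_cons_inv in H as (G1&G2&n1&n2&H1&H2&E&->).
    destruct (IH _ _ _ H1) as (Ga&Da&na&ma&Ta&Xa&Sa). destruct (IHA _ _ H2) as (Gb&Db&nb&mb&Tb&Xb&Sb).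
    exists (cadd Ga Gb), (cadd Da Db), (na+nb), (ma+mb); repeat split.
    + eapply tjs_cons; eauto; apply ceq_refl.
    + apply tjs_app; auto.
    + rewrite cdnc_cadd, clift_cadd. eapply csub_ceq_r; [|exact E].
      eapply csub_trans; [|apply csub_add; [exact Sa|exact Sb]]. apply csub_ceq. cunf; pcount.
Qed.

Lemma anti_subst : forall t c X G s n, tj G (substAt c X t) s n ->
  exists Gt D nt m, tj Gt t s nt /\ tjs D X (Gt c) m /\ csub (cadd (cdnc c Gt) (clift c 0 D)) G.
Proof.
  induction t as [x|t IH|t IHt u IHu r IHr]; intros c X G s n H.
  - simpl in H. destruct (Nat.ltb_spec x c).
    + apply inv_var in H as [-> Hs]. exists (csing x s), cempty, 1, 0; repeat split; [constructor| |].
      * unfold csing. destruct (Nat.eqb_spec c x); [lia|constructor].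
      * rewrite cdnc_csing_lt, clift_cempty, cadd_empty_r; auto.
    + destruct (Nat.eqb_spec x c).
      * subst. apply anti_lift in H as (D0&T0&S0). exists (csing c s), D0, 1, n; repeat split; [constructor| |].
        -- unfold csing. rewrite Nat.eqb_refl. apply tjs_single; auto.
        -- rewrite cdnc_csing_eq, cadd_empty_l; auto.
      * apply inv_var in H as [-> Hs]. exists (csing x s), cempty, 1, 0; repeat split; [constructor| |].
        -- unfold csing. destruct (Nat.eqb_spec c x); [lia|constructor].
        -- rewrite cdnc_csing_gt, clift_cempty, cadd_empty_r by lia; auto.
  - simpl in H. apply inv_lam in H as (G1&M&s0&n0&->&->&H1&P&Sd).
    destruct (IH _ _ _ _ _ H1) as (Gt&D&nt&m&Tt&XD&St).
    pose proof (csub_at _ _ 0 St) as Sub. cbn in Sub. rewrite app_nil_r in Sub. destruct Sub as [J PJ].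
    exists (cdn (cadd Gt (cz J))), D, (S nt), m; repeat split.
    + apply tj_lam; [apply tj_addcz; auto|]. rewrite cadd_cz0. eapply perm_trans; [exact P|apply Permutation_sym; auto].
    + unfold cdn at 1. rewrite cadd_czS. auto.
    + rewrite cdn_cadd_cz, <- cdn_cdnc, <- cdn_clift0, <- cdn_cadd. eapply csub_trans; [apply csub_cdn; exact St|auto].
  - simpl in H. apply inv_app in H as (G1&G2&G3&A&B&n1&n2&n3&H1&H2&H3&Ok&->&Sd).
    destruct (anti_subst_tjs_of _ _ _ (IHt c X) _ _ _ H1) as (Ga&Da&na&ma&Ta&Xa&Sa).
    destruct (anti_subst_tjs_of _ _ _ (IHu c X) _ _ _ H2) as (Gb&Db&nb&mb&Tb&Xb&Sb).
    destruct (IHr _ _ _ _ _ H3) as (Gr&Dr&nr&mr&Tr&Xr&Sr).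
    pose proof (csub_at _ _ 0 Sr) as Sub. cbn in Sub. rewrite app_nil_r in Sub. destruct Sub as [J PJ].
    exists (cadd Ga (cadd Gb (cdn (cadd Gr (cz J))))), (cadd Da (cadd Db Dr)), (S (na+nb+nr)), (ma+(mb+mr)); repeat split.
    + apply tj_app with (A:=A) (B:=B); auto. apply tj_addcz; auto.
      eapply app_ok_perm; eauto; try apply Permutation_refl. rewrite cadd_cz0; apply Permutation_sym; auto.
    + change (tjs (cadd Da (cadd Db Dr)) X (Ga c ++ (Gb c ++ cadd Gr (cz J) (S c))) (ma+(mb+mr))).
      rewrite cadd_czS.
      apply tjs_app; auto. apply tjs_app; auto.
    + rewrite cdn_cadd_cz. eapply csub_trans; [|exact Sd].
      eapply csub_trans; [|apply csub_add; [exact Sa|apply csub_add; [exact Sb|apply csub_cdn; exact Sr]]].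
      apply csub_ceq. rewrite !cdnc_cadd, !clift_cadd, !cdn_cadd, cdn_cdnc, cdn_clift0. cunf. pcount.
Qed.
Lemma lift_0 : forall t c, lift 0 c t = t.
Proof. induction t; intros; simpl; try (rewrite ?IHt, ?IHt1, ?IHt2, ?IHt3; auto; fail).
  destruct (n <? c); try reflexivity; f_equal; lia. Qed.

Lemma lift_lift : forall t a b c, lift a c (lift b c t) = lift (a+b) c t.
Proof. induction t; intros; simpl; try (rewrite ?IHt, ?IHt1, ?IHt2, ?IHt3; auto; fail).
  destruct (Nat.ltb_spec n c); simpl.
  - destruct (Nat.ltb_spec n c); [auto|lia].
  - destruct (Nat.ltb_spec (n+b) c); [lia|]. f_equal; lia. Qed.

Lemma clift_S0 k D : clift (S k) 0 D 0 = [].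
Proof. reflexivity. Qed.

Lemma plugsub : forall D G s M tau n, tj G (plug D (Lam s)) (TArr M tau) n ->
  forall Dl u m, tjs Dl u M m ->
  exists n', n' < n + m /\ tj (cadd G Dl) (plug D (subst0 (lift (length D) 0 u) s)) tau n'.
Proof.
  induction D as [|[a b] D IH]; intros G s M tau n H Dl u m Hu; simpl in *.
  - apply inv_lam in H as (G0&M'&s0&n0&Eq&->&H0&P&Sd). injection Eq; intros; subst.
    apply tjs_perm with (A' := G0 0) in Hu; auto.
    destruct (proj1 subst_typ _ _ _ _ H0 0 u Dl m Hu) as (n'&Le&T).
    exists n'; split; [lia|]. rewrite lift_0. unfold subst0. rewrite cdnc0, clift00 in T.
    eapply tj_weak; [exact T|]. apply csub_add; auto. apply csub_refl.
  - apply inv_app in H as (G1&G2&G3&A&B&n1&n2&n3&H1&H2&H3&Ok&->&Sd).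
    pose proof (proj2 lift_typ _ _ _ _ Hu 1 0) as Hu'.
    destruct (IH _ _ _ _ _ H3 _ _ _ Hu') as (n3'&Le&T).
    rewrite lift_lift, Nat.add_1_r in T.
    exists (S (n1+n2+n3')); split; [lia|].
    eapply tj_weak. apply tj_app with (A:=A) (B:=B); eauto.
    + eapply app_ok_perm; eauto; try apply Permutation_refl. unfold cadd. rewrite clift_S0, app_nil_r; apply Permutation_refl.
    + rewrite cdn_cadd, cdn_clift10. eapply csub_trans; [|apply csub_add; [exact Sd|apply csub_refl]].
      apply csub_ceq. cunf. pcount.
Qed.

Lemma plugsub_multi D s u : forall ps G1 n1 G2 n2,
  tjs G1 (plug D (Lam s)) (map arr ps) n1 -> tjs G2 u (concat (map fst ps)) n2 ->
  exists Dl m, tjs Dl (plug D (subst0 (lift (length D) 0 u) s)) (map snd ps) m /\ csub Dl (cadd G1 G2) /\ m <= n1 + n2.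
Proof.
  induction ps as [|p ps IH]; intros G1 n1 G2 n2 H1 H2; simpl in *.
  - exists cempty, 0; repeat split; [constructor| |lia]. exists (cadd G1 G2). cunf. apply Permutation_refl.
  - apply tjs_cons_inv in H1 as (Ga&Gb&na&nb&Ha&Hb&E&->).
    apply tjs_split in H2 as (Gc&Gd&nc&nd&Hc&Hd&E2&->).
    destruct (plugsub _ _ _ _ _ _ Ha _ _ _ Hc) as (k&Lk&Tk).
    destruct (IH _ _ _ _ Hb Hd) as (Dl&m&TD&SD&Lm).
    exists (cadd (cadd Ga Gc) Dl), (k+m); repeat split; [eapply tjs_cons; eauto; apply ceq_refl| |lia].
    eapply csub_trans; [apply csub_add; [apply csub_refl|exact SD]|].
    apply csub_ceq. cunf. pcount.
Qed.

Lemma dbeta_root_SR t t' : dbeta_root t t' -> forall G sg n, tj G t sg n -> exists n', n' < n /\ tj G t' sg n'.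
Proof.
  intros [D s u r] G sg n H.
  apply inv_app in H as (G1&G2&G3&A&B&n1&n2&n3&H1&H2&H3&Ok&->&Sd).
  set (X := plug D (subst0 (lift (length D) 0 u) s)).
  assert (HX : exists Dl m, tjs Dl X (G3 0) m /\ csub Dl (cadd G1 G2) /\ m <= n1 + n2).
  { destruct Ok as [[HY [ps [PY [PA PB]]]]|[HY [HA HB]]].
    - apply tjs_perm with (A' := map arr ps) in H1; auto.
      destruct PB as [[NE PB]|[E1 LB]].
      + apply tjs_perm with (A' := concat (map fst ps)) in H2; auto.
        destruct (plugsub_multi _ _ _ _ _ _ _ _ H1 H2) as (Dl&m&T&Sx&L).
        exists Dl, m; repeat split; auto. eapply tjs_perm; eauto.
      + assert (H2' : tjs cempty u (concat (map fst ps)) 0) by (rewrite E1; constructor).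
        destruct (plugsub_multi _ _ _ _ _ _ _ _ H1 H2') as (Dl&m&T&Sx&L).
        exists Dl, m; repeat split; [eapply tjs_perm; eauto| |lia].
        eapply csub_trans; [exact Sx|]. apply csub_add; [apply csub_refl|exists G2; cunf; apply Permutation_refl].
    - exists cempty, 0; repeat split; [rewrite HY; constructor| |lia]. exists (cadd G1 G2); cunf; apply Permutation_refl. }
  destruct HX as (Dl&m&HX&SX&Lm).
  destruct (proj1 subst_typ _ _ _ _ H3 0 X Dl m HX) as (n'&Le&T).
  rewrite cdnc0, clift00 in T. exists n'; split; [lia|].
  eapply tj_weak; [exact T|]. eapply csub_trans; [|exact Sd].
  eapply csub_trans; [apply csub_add; [apply csub_refl|exact SX]|]. apply csub_ceq; cunf; pcount.
Qed.

Definition typable t := exists G s n, tj G t s n.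

Lemma antiplug : forall D G s u tau n, tj G (plug D (subst0 (lift (length D) 0 u) s)) tau n ->
  exists G' Dl M n' m, tj G' (plug D (Lam s)) (TArr M tau) n' /\ tjs Dl u M m /\ csub (cadd G' Dl) G.
Proof.
  induction D as [|[a b] D IH]; intros G s u tau n H; simpl in *.
  - rewrite lift_0 in H. unfold subst0 in H. apply anti_subst in H as (Gt&D0&nt&m&Tt&XD&Sx).
    exists (cdn Gt), D0, (Gt 0), (S nt), m; repeat split; auto.
    + apply tj_lam; auto.
    + rewrite cdnc0, clift00 in Sx; auto.
  - apply inv_app in H as (G1&G2&G3&A&B&n1&n2&n3&H1&H2&H3&Ok&->&Sd).
    rewrite <- Nat.add_1_r, <- lift_lift in H3.
    destruct (IH _ _ _ _ _ H3) as (G3'&Dl'&M&n'&m&T3&Tu&S3).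
    apply anti_lift_tjs in Tu as (D0&Tu&SD0).
    pose proof (csub_at _ _ 0 S3) as Sub. destruct Sub as [J0 PJ0]. unfold cadd in PJ0 at 1.
    exists (cadd G1 (cadd G2 (cdn (cadd G3' (cz (Dl' 0 ++ J0)))))), D0, M, (S (n1+n2+n')), m; repeat split; auto.
    + apply tj_app with (A:=A) (B:=B); auto. apply tj_addcz; auto.
      eapply app_ok_perm; eauto; try apply Permutation_refl. rewrite cadd_cz0.
      rewrite <- app_assoc in PJ0. apply Permutation_sym; exact PJ0.
    + rewrite cdn_cadd_cz. eapply csub_trans; [|exact Sd].
      assert (S4 : csub (cadd G3' (clift 1 0 D0)) G3).
      { eapply csub_trans; [|exact S3]. apply csub_add; [apply csub_refl|auto]. }
      apply csub_cdn in S4. rewrite cdn_cadd, cdn_clift10 in S4.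
      eapply csub_trans; [|apply csub_add; [apply csub_refl|apply csub_add; [apply csub_refl|exact S4]]].
      apply csub_ceq; cunf; pcount.
Qed.

Lemma antiplug_multi D s u : forall L Dl m, tjs Dl (plug D (subst0 (lift (length D) 0 u) s)) L m ->
  exists ps G1 n1 G2 n2, map snd ps = L /\ tjs G1 (plug D (Lam s)) (map arr ps) n1 /\
    tjs G2 u (concat (map fst ps)) n2.
Proof.
  induction L as [|tau L IH]; intros Dl m H.
  - exists [], cempty, 0, cempty, 0; repeat split; constructor.
  - apply tjs_cons_inv in H as (Ga&Gb&na&nb&Ha&Hb&_&_).
    destruct (antiplug _ _ _ _ _ _ Ha) as (G'&Dl'&M&n'&m'&T&Tu&_).
    destruct (IH _ _ Hb) as (ps&G1&n1&G2&n2&E&T1&T2).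
    exists ((M,tau)::ps), (cadd G' G1), (n'+n1), (cadd Dl' G2), (m'+n2); repeat split.
    + simpl; f_equal; auto.
    + simpl. eapply tjs_cons; eauto. apply ceq_refl.
    + simpl. apply tjs_app; auto.
Qed.

Lemma tjs_of_typable t : typable t -> exists G s n, tjs G t [s] n.
Proof. intros (G&s&n&H); exists G, s, n; apply tjs_single; auto. Qed.

Lemma dbeta_root_SE D s u r G sg n :
  tj G (subst0 (plug D (subst0 (lift (length D) 0 u) s)) r) sg n ->
  typable (plug D (Lam s)) -> typable u ->
  exists G' n', tj G' (App (plug D (Lam s)) u r) sg n'.
Proof.
  intros H TT TU. unfold subst0 at 1 in H. apply anti_subst in H as (Gr&D0&nr&m&Tr&XD&_).
  destruct (tjs_of_typable _ TU) as (Gu&su&nu&Hu).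
  destruct (Gr 0) as [|tau L] eqn:EG.
  - destruct (tjs_of_typable _ TT) as (Gt&st&nt&Ht).
    do 2 eexists. apply tj_app with (A:=[st]) (B:=[su]); eauto. right; rewrite EG; auto.
  - destruct (antiplug_multi _ _ _ _ _ _ XD) as (ps&G1&n1&G2&n2&E&T1&T2).
    destruct (concat (map fst ps)) as [|x l] eqn:EC.
    + do 2 eexists. apply tj_app with (A:=map arr ps) (B:=[su]); eauto.
      left. rewrite EG. split; [discriminate|]. exists ps; repeat split; [rewrite E; apply Permutation_refl|apply Permutation_refl|].
      right; split; auto.
    + do 2 eexists. apply tj_app with (A:=map arr ps) (B:=x::l); eauto.
      left. rewrite EG. split; [discriminate|]. exists ps; repeat split; [rewrite E; apply Permutation_refl|apply Permutation_refl|].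
      left; split; [rewrite EC; discriminate|rewrite EC; apply Permutation_refl].
Qed.
Lemma subm_refl L : subm L L. Proof. exists []; rewrite app_nil_r; apply Permutation_refl. Qed.
Lemma subm_app_l L L' : subm L (L ++ L'). Proof. exists L'; apply Permutation_refl. Qed.
Lemma subm_app_r L L' : subm L' (L ++ L'). Proof. exists L; apply Permutation_app_comm. Qed.
Lemma subm_trans a b c : subm a b -> subm b c -> subm a c.
Proof. intros [K1 P1] [K2 P2]; exists (K1 ++ K2). pcount. Qed.
Lemma subm_perm a b c : subm a b -> Permutation b c -> subm a c.
Proof. intros [K1 P1] P2; exists K1; eapply perm_trans; eauto. Qed.
Lemma subm_app a b c d : subm a b -> subm c d -> subm (a ++ c) (b ++ d).
Proof. intros [K1 P1] [K2 P2]; exists (K1 ++ K2). pcount. Qed.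

Lemma perm_concat {X} (L L' : list (list X)) : Permutation L L' -> Permutation (concat L) (concat L').
Proof.
  induction 1; simpl; auto.
  - apply Permutation_app_head; auto.
  - rewrite !app_assoc. apply Permutation_app_tail, Permutation_app_comm.
  - eapply perm_trans; eauto.
Qed.

Lemma concat_map_app (l1 l2 : list (list ty * ty)) :
  concat (map fst (l1 ++ l2)) = concat (map fst l1) ++ concat (map fst l2).
Proof. rewrite map_app, concat_app; auto. Qed.

Lemma app_ok_merge A1 B1 Y1 A2 B2 Y2 : app_ok A1 B1 Y1 -> app_ok A2 B2 Y2 ->
  exists A' B', app_ok A' B' (Y1 ++ Y2) /\ subm A' (A1 ++ A2) /\ subm B' (B1 ++ B2).
Proof.
  intros [[HY1 [ps1 [PY1 [PA1 PB1]]]]|[HY1 [HA1 HB1]]] [[HY2 [ps2 [PY2 [PA2 PB2]]]]|[HY2 [HA2 HB2]]].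
  - assert (PY : Permutation (map snd (ps1 ++ ps2)) (Y1 ++ Y2)) by (rewrite map_app; apply Permutation_app; auto).
    assert (PA : Permutation (A1 ++ A2) (map arr (ps1 ++ ps2))) by (rewrite map_app; apply Permutation_app; auto).
    assert (NY : Y1 ++ Y2 <> []) by (intro E; apply app_eq_nil in E; tauto).
    destruct PB1 as [[N1 P1]|[E1 L1]]; destruct PB2 as [[N2 P2]|[E2 L2]].
    + exists (A1 ++ A2), (B1 ++ B2); repeat split; try apply subm_refl. left; split; auto. exists (ps1 ++ ps2); repeat split; auto.
      left; rewrite concat_map_app; split; [intro E; apply app_eq_nil in E; tauto|apply Permutation_app; auto].
    + exists (A1 ++ A2), B1; repeat split; try apply subm_refl; [|apply subm_app_l]. left; split; auto. exists (ps1 ++ ps2); repeat split; auto.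
      left; rewrite concat_map_app, E2, app_nil_r; auto.
    + exists (A1 ++ A2), B2; repeat split; try apply subm_refl; [|apply subm_app_r]. left; split; auto. exists (ps1 ++ ps2); repeat split; auto.
      left; rewrite concat_map_app, E1; auto.
    + exists (A1 ++ A2), B1; repeat split; try apply subm_refl; [|apply subm_app_l]. left; split; auto. exists (ps1 ++ ps2); repeat split; auto.
      right; rewrite concat_map_app, E1, E2; auto.
  - subst. exists A1, B1; rewrite app_nil_r; repeat split; [|apply subm_app_l|apply subm_app_l].
    left; split; auto. exists ps1; auto.
  - subst. exists A2, B2; simpl; repeat split; [|apply subm_app_r|apply subm_app_r].
    left; split; auto. exists ps2; auto.
  - subst. exists A1, B1; simpl; repeat split; [|apply subm_app_l|apply subm_app_l]. right; auto.
Qed.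

Lemma pi_merge t u r : forall A G n, tjs G (App t u r) A n -> A <> [] ->
  exists Gt Gu Gr At Bu nt nu nr, tjs Gt t At nt /\ tjs Gu u Bu nu /\ tjs Gr r A nr /\
    app_ok At Bu (Gr 0) /\ csub (cadd Gt (cadd Gu (cdn Gr))) G /\ nt + nu + nr + length A <= n.
Proof.
  induction A as [|rho A IH]; intros G n H NE; [congruence|].
  apply tjs_cons_inv in H as (Ga&Gb&na&nb&Ha&Hb&E&->).
  apply inv_app in Ha as (G1&G2&G3&A1&B1&n1&n2&n3&H1&H2&H3&Ok&->&Sd).
  destruct A as [|rho' A'].
  - apply tjs_nil_inv in Hb as [-> ->]. rewrite cadd_empty_r in E.
    exists G1, G2, G3, A1, B1, n1, n2, n3; repeat split; auto.
    + apply tjs_single; auto.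
    + eapply csub_ceq_r; eauto.
    + simpl; lia.
  - destruct (IH _ _ Hb ltac:(discriminate)) as (Gt&Gu&Gr&At&Bu&nt&nu&nr&Tt&Tu&Tr&Ok2&S2&L2).
    destruct (app_ok_merge _ _ _ _ _ _ Ok Ok2) as (A3&B3&Ok'&SA&SB).
    destruct (tjs_sub _ _ _ _ _ (tjs_app _ _ _ _ _ _ _ H1 Tt) SA) as (Gt'&nt'&Tt'&St'&Lt').
    destruct (tjs_sub _ _ _ _ _ (tjs_app _ _ _ _ _ _ _ H2 Tu) SB) as (Gu'&nu'&Tu'&Su'&Lu').
    exists Gt', Gu', (cadd G3 Gr), A3, B3, nt', nu', (n3 + nr); repeat split; auto.
    + eapply tjs_cons; eauto. apply ceq_refl.
    + eapply csub_ceq_r; [|exact E].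
      eapply csub_trans; [apply csub_add; [exact St'|apply csub_add; [exact Su'|apply csub_refl]]|].
      eapply csub_trans; [|apply csub_add; [exact Sd|exact S2]].
      apply csub_ceq. cunf. pcount.
    + simpl in *. lia.
Qed.

Lemma pi_root_SR t t' : pi_root t t' -> forall G sg n, tj G t sg n -> exists n', n' <= n /\ tj G t' sg n'.
Proof.
  intros [t0 u r u' r'] G sg n H.
  apply inv_app in H as (G1&G2&G3&A&B&n1&n2&n3&H1&H2&H3&Ok&->&Sd).
  destruct (app_ok_ne _ _ _ Ok) as [NA NB].
  destruct (pi_merge _ _ _ _ _ _ H1 NA) as (Gt&Gu&Gr&At&Bu&nt&nu&nr&Tt&Tu&Tr&Ok2&S2&L2).
  pose proof (proj2 lift_typ _ _ _ _ H2 1 0) as H2'.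
  pose proof (proj1 lift_typ _ _ _ _ H3 1 1) as H3'.
  assert (Ti : tj (cadd Gr (cadd (clift 1 0 G2) (cdn (clift 1 1 G3)))) (App r (lift 1 0 u') (lift 1 1 r')) sg (S (nr+n2+n3))).
  { apply tj_app with (A:=A) (B:=B); auto. }
  exists (S (nt+nu+S(nr+n2+n3))); split.
  - destruct A; [congruence|]. simpl in L2. lia.
  - eapply tj_weak. apply tj_app with (A:=At) (B:=Bu); eauto.
    + eapply app_ok_perm; eauto; try apply Permutation_refl.
      unfold cadd. change (clift 1 0 G2 0) with (@nil ty). change (cdn (clift 1 1 G3) 0) with (@nil ty).
      simpl. rewrite app_nil_r; apply Permutation_refl.
    + rewrite !cdn_cadd, cdn_clift10, cdn_cdn_clift11.
      eapply csub_trans; [|exact Sd].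
      eapply csub_trans; [|apply csub_add; [exact S2|apply csub_refl]].
      apply csub_ceq. cunf. pcount.
Qed.

Lemma app_from_sub t u r At Bu Y Gt Gu nt nu Gk rho nk :
  tjs Gt t At nt -> tjs Gu u Bu nu -> app_ok At Bu Y -> tj Gk r rho nk -> subm (Gk 0) Y ->
  exists G n, tj G (App t u r) rho n.
Proof.
  intros Ht Hu Ok Hr Sub.
  destruct (app_ok_ne _ _ _ Ok) as [NA NB].
  destruct At as [|a At]; [congruence|]. destruct Bu as [|b Bu]; [congruence|].
  destruct (tjs_in _ _ _ _ a Ht (or_introl eq_refl)) as (Ga&na&Ta).
  destruct (tjs_in _ _ _ _ b Hu (or_introl eq_refl)) as (Gb&nb&Tb).
  destruct (Gk 0) as [|y Yk] eqn:EY.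
  - do 2 eexists. apply tj_app with (A:=[a]) (B:=[b]); [apply tjs_single; eauto|apply tjs_single; eauto|eauto|].
    right; rewrite EY; auto.
  - destruct Ok as [[HY [ps [PY [PA PB]]]]|[HY _]].
    2:{ subst. destruct Sub as [K P]. apply Permutation_sym, Permutation_nil in P. discriminate. }
    destruct Sub as [K P].
    assert (P2 : Permutation (map snd ps) ((y::Yk) ++ K)) by (eapply perm_trans; [exact PY|apply Permutation_sym; auto]).
    apply Permutation_sym, Permutation_map_inv in P2 as (l3&E3&P3).
    symmetry in E3. apply map_eq_app in E3 as (l1&l2&->&E1&E2).
    apply tjs_perm with (A' := map arr l1 ++ map arr l2) in Ht; [|rewrite <- map_app; eapply perm_trans; [exact PA|apply Permutation_map; auto]].
    apply tjs_split in Ht as (G1&_&n1&_&T1&_).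
    assert (PC : Permutation (concat (map fst ps)) (concat (map fst l1) ++ concat (map fst l2)))
      by (rewrite <- concat_map_app; apply perm_concat, Permutation_map; auto).
    destruct (concat (map fst l1)) as [|c cs] eqn:EC.
    + do 2 eexists. apply tj_app with (A:=map arr l1) (B:=[b]); [eauto|apply tjs_single; eauto|eauto|].
      left. rewrite EY. split; [discriminate|]. exists l1; repeat split; [rewrite E1; apply Permutation_refl|apply Permutation_refl|].
      right; split; auto.
    + destruct PB as [[NC PB]|[EC2 _]].
      * apply tjs_perm with (A' := (c::cs) ++ concat (map fst l2)) in Hu; [|eapply perm_trans; eauto].
        apply tjs_split in Hu as (G2&_&n2&_&T2&_).
        do 2 eexists. apply tj_app with (A:=map arr l1) (B:=c::cs); [eauto|eauto|eauto|].
        left. rewrite EY. split; [discriminate|]. exists l1; repeat split; [rewrite E1; apply Permutation_refl|apply Permutation_refl|].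
        left; rewrite EC; split; [discriminate|apply Permutation_refl].
      * rewrite EC2 in PC. apply Permutation_nil in PC. discriminate.
Qed.

Lemma build_inner t u r At Bu Y Gt Gu nt nu : tjs Gt t At nt -> tjs Gu u Bu nu -> app_ok At Bu Y ->
  forall A Gr nr, tjs Gr r A nr -> subm (Gr 0) Y -> exists G n, tjs G (App t u r) A n.
Proof.
  intros Ht Hu Ok A; induction A as [|rho A IH]; intros Gr nr Hr Sub.
  - exists cempty, 0; constructor.
  - apply tjs_cons_inv in Hr as (Ga&Gb&na&nb&Ha&Hb&E&->).
    assert (Sa : subm (Ga 0) Y) by (eapply subm_trans; [|exact Sub]; eapply subm_perm; [apply subm_app_l|apply (E 0)]).
    assert (Sb : subm (Gb 0) Y) by (eapply subm_trans; [|exact Sub]; eapply subm_perm; [apply subm_app_r|apply (E 0)]).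
    destruct (app_from_sub _ _ _ _ _ _ _ _ _ _ _ _ _ Ht Hu Ok Ha Sa) as (G1&n1&T1).
    destruct (IH _ _ Hb Sb) as (G2&n2&T2).
    exists (cadd G1 G2), (n1+n2). eapply tjs_cons; eauto. apply ceq_refl.
Qed.

Lemma pi_root_SE t t' : pi_root t t' -> forall G sg n, tj G t' sg n -> exists G' n', tj G' t sg n'.
Proof.
  intros [t0 u r u' r'] G sg n H.
  apply inv_app in H as (Gt&Gu&Gi&At&Bu&nt&nu&ni&Ht&Hu&Hi&Ok1&_&_).
  apply inv_app in Hi as (Gr&G2'&G3'&A&B&nr&n2&n3&Hr&H2&H3&Ok2&_&Si).
  apply anti_lift_tjs in H2 as (G2&T2&_).
  apply anti_lift in H3 as (G3&T3&S3).
  pose proof (csub_at _ _ 0 S3) as Sub. change (clift 1 1 G3 0) with (G3 0) in Sub. destruct Sub as [J PJ].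
  assert (SubR : subm (Gr 0) (Gi 0)).
  { pose proof (csub_at _ _ 0 Si) as X. eapply subm_trans; [|exact X]. apply subm_app_l. }
  destruct (build_inner _ _ _ _ _ _ _ _ _ _ Ht Hu Ok1 _ _ _ Hr SubR) as (Ga&na&Ta).
  do 2 eexists. apply tj_app with (A:=A) (B:=B) (G3 := cadd G3 (cz J)); eauto.
  - apply tj_addcz; eauto.
  - eapply app_ok_perm; [exact Ok2| apply Permutation_refl| apply Permutation_refl|]. rewrite cadd_cz0; apply Permutation_sym; auto.
Qed.
Definition ord (strict : bool) (a b : nat) := if strict then a < b else a <= b.

Lemma ord_add st a b c d : ord st a b -> (ord st c d \/ c = d) -> ord st (a + c) (b + d).
Proof. unfold ord; destruct st; intros; lia. Qed.

Lemma tjs_SR st t t' : (forall G s n, tj G t s n -> exists n', ord st n' n /\ tj G t' s n') ->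
  forall A G n, tjs G t A n -> A <> [] -> exists n', ord st n' n /\ tjs G t' A n'.
Proof.
  intros HS A; induction A as [|s A IH]; intros G n H NE; [congruence|].
  apply tjs_cons_inv in H as (G1&G2&n1&n2&H1&H2&E&->).
  destruct (HS _ _ _ H1) as (n1'&O1&T1).
  destruct A as [|s' A'].
  - apply tjs_nil_inv in H2 as [-> ->]. exists (n1'+0); split; [apply ord_add; auto|].
    eapply tjs_cons; eauto. constructor.
  - destruct (IH _ _ H2 ltac:(discriminate)) as (n2'&O2&T2).
    exists (n1'+n2'); split; [apply ord_add; auto|]. eapply tjs_cons; eauto.
Qed.

Lemma ctx_SR (R : term -> term -> Prop) st :
  (forall t t', R t t' -> forall G s n, tj G t s n -> exists n', ord st n' n /\ tj G t' s n') ->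
  forall t t', ctx_closure R t t' -> forall G s n, tj G t s n -> exists n', ord st n' n /\ tj G t' s n'.
Proof.
  intros HR t t' Hs; induction Hs as [a b Hab|a b Hs IHHs|a b u r Hs IHHs|t a b r Hs IHHs|t u a b Hs IHHs]; intros G s n H.
  - eapply HR; eauto.
  - apply inv_lam in H as (G0&M&s0&n0&->&->&H0&P&Sd).
    destruct (IHHs _ _ _ H0) as (n'&O&T). exists (S n'); split; [unfold ord in *; destruct st; lia|].
    eapply tj_weak; [apply tj_lam; eauto|auto].
  - apply inv_app in H as (G1&G2&G3&A&B&n1&n2&n3&H1&H2&H3&Ok&->&Sd).
    destruct (app_ok_ne _ _ _ Ok) as [NA NB].
    destruct (tjs_SR _ _ _ IHHs _ _ _ H1 NA) as (n'&O&T).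
    exists (S (n'+n2+n3)); split; [unfold ord in *; destruct st; lia|].
    eapply tj_weak; [apply tj_app with (A:=A) (B:=B); eauto|auto].
  - apply inv_app in H as (G1&G2&G3&A&B&n1&n2&n3&H1&H2&H3&Ok&->&Sd).
    destruct (app_ok_ne _ _ _ Ok) as [NA NB].
    destruct (tjs_SR _ _ _ IHHs _ _ _ H2 NB) as (n'&O&T).
    exists (S (n1+n'+n3)); split; [unfold ord in *; destruct st; lia|].
    eapply tj_weak; [apply tj_app with (A:=A) (B:=B); eauto|auto].
  - apply inv_app in H as (G1&G2&G3&A&B&n1&n2&n3&H1&H2&H3&Ok&->&Sd).
    destruct (IHHs _ _ _ H3) as (n'&O&T).
    exists (S (n1+n2+n')); split; [unfold ord in *; destruct st; lia|].
    eapply tj_weak; [apply tj_app with (A:=A) (B:=B); eauto|auto].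
Qed.

Lemma beta_dbeta t t' : beta_root t t' -> dbeta_root t t'.
Proof.
  intros [t0 u r].
  pose proof (dbeta_rule [] t0 u r) as H. simpl in H. rewrite lift_0 in H. exact H.
Qed.

Lemma dstep_SR t t' : dbeta_step t t' -> forall G s n, tj G t s n -> exists n', n' < n /\ tj G t' s n'.
Proof.
  intros Hs G s n H. apply (ctx_SR dbeta_root true) with (t:=t); auto.
  intros; eapply dbeta_root_SR; eauto.
Qed.

Lemma bstep_SR t t' : beta_step t t' -> forall G s n, tj G t s n -> exists n', n' < n /\ tj G t' s n'.
Proof.
  intros Hs G s n H. apply (ctx_SR beta_root true) with (t:=t); auto.
  intros; eapply dbeta_root_SR; eauto. apply beta_dbeta; auto.
Qed.

Lemma pstep_SR t t' : pi_step t t' -> forall G s n, tj G t s n -> exists n', n' <= n /\ tj G t' s n'.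
Proof.
  intros Hs G s n H. apply (ctx_SR pi_root false) with (t:=t); auto.
  intros; eapply pi_root_SR; eauto.
Qed.

Fixpoint phi (t : term) : nat :=
  match t with
  | Var _ => 1
  | Lam a => S (phi a)
  | App a b r => 2 * phi a + phi b + phi r + 1
  end.

Lemma phi_lift : forall t k c, phi (lift k c t) = phi t.
Proof. induction t; intros; simpl; try (destruct (n <? c); reflexivity); rewrite ?IHt, ?IHt1, ?IHt2, ?IHt3; auto. Qed.

Lemma pstep_phi t t' : pi_step t t' -> phi t' < phi t.
Proof.
  induction 1; simpl; try lia.
  destruct H; simpl. rewrite !phi_lift. lia.
Qed.

Lemma typ_acc_d : forall n G t s, tj G t s n -> Acc (fun a b => dbeta_step b a) t.
Proof.
  intro n; induction n as [n IH] using lt_wf_ind; intros G t s H.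
  constructor; intros t' Hs. destruct (dstep_SR _ _ Hs _ _ _ H) as (n'&L&T). eapply IH; eauto.
Qed.

Lemma typ_acc_bp : forall n p G t s, tj G t s n -> phi t = p -> Acc (fun a b => union_rel beta_step pi_step b a) t.
Proof.
  intro n; induction n as [n IH] using lt_wf_ind; intro p; induction p as [p IHp] using lt_wf_ind;
  intros G t s H Ep. constructor; intros t' [Hs|Hs].
  - destruct (bstep_SR _ _ Hs _ _ _ H) as (n'&L&T). eapply IH; eauto.
  - destruct (pstep_SR _ _ Hs _ _ _ H) as (n'&L&T). pose proof (pstep_phi _ _ Hs).
    destruct (Nat.eq_dec n' n).
    + subst. eapply (IHp (phi t')); [lia|eauto|reflexivity].
    + eapply (IH n'); [lia|eauto|reflexivity].
Qed.
Inductive hctx : Type := Hole | HL (H : hctx) (b r : term) | HR (a b : term) (H : hctx).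
Fixpoint fill (H : hctx) (x : term) : term :=
  match H with Hole => x | HL H b r => App (fill H x) b r | HR a b H => App a b (fill H x) end.

Definition dredex D s u r := App (plug D (Lam s)) u r.
Definition dcontr D s u r := subst0 (plug D (subst0 (lift (length D) 0 u) s)) r.

Inductive ISN : term -> Prop :=
| isn_var x : ISN (Var x)
| isn_lam t : ISN t -> ISN (Lam t)
| isn_ne a b r : NE a -> ISN b -> ISN r -> ISN (App a b r)
| isn_h H D s u r : HOK H -> ISN (fill H (dcontr D s u r)) -> ISN (plug D (Lam s)) -> ISN u ->
    ISN (fill H (dredex D s u r))
with NE : term -> Prop :=
| ne_var x : NE (Var x)
| ne_app a b r : NE a -> ISN b -> NE r -> NE (App a b r)
with HOK : hctx -> Prop :=
| hok_hole : HOK Hole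
| hok_l H b r : HOK H -> HOK (HL H b r)
| hok_r a b H : NE a -> HOK H -> HOK (HR a b H).

Scheme ISN_ind2 := Induction for ISN Sort Prop
with NE_ind2 := Induction for NE Sort Prop
with HOK_ind2 := Induction for HOK Sort Prop.
Combined Scheme ISN_mut from ISN_ind2, NE_ind2, HOK_ind2.

Definition free_typ a := forall s, exists G n, tj G a s n.

Fixpoint hfree (H : hctx) : Prop :=
  match H with Hole => True | HL H _ _ => hfree H | HR a _ H => free_typ a /\ hfree H end.

Lemma free_tjs a : free_typ a -> forall L, exists G n, tjs G a L n.
Proof.
  intros F L; induction L as [|s L IH].
  - exists cempty, 0; constructor.
  - destruct (F s) as (G1&n1&T1). destruct IH as (G2&n2&T2).
    exists (cadd G1 G2), (n1+n2); eapply tjs_cons; eauto; apply ceq_refl.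
Qed.

Lemma concat_nil_map (L : list ty) : concat (map fst (map (fun tau => (@nil ty, tau)) L)) = [].
Proof. induction L; simpl; auto. Qed.

Lemma app_free a b r G3 sg n3 : free_typ a -> typable b -> tj G3 r sg n3 ->
  exists G n, tj G (App a b r) sg n.
Proof.
  intros Fa (Gb&sb&nb&Tb) Tr.
  destruct (G3 0) as [|tau L] eqn:EG.
  - destruct (Fa TA) as (Ga&na&Ta).
    do 2 eexists. apply tj_app with (A:=[TA]) (B:=[sb]); [apply tjs_single; eauto|apply tjs_single; eauto|eauto|].
    right; rewrite EG; auto.
  - set (ps := map (fun tau => (@nil ty, tau)) (tau::L)).
    destruct (free_tjs a Fa (map arr ps)) as (Ga&na&Ta).
    do 2 eexists. apply tj_app with (A:=map arr ps) (B:=[sb]); [eauto|apply tjs_single; eauto|eauto|].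
    left. rewrite EG. split; [discriminate|]. exists ps; repeat split.
    + unfold ps. rewrite map_map. simpl. rewrite map_id. apply Permutation_refl.
    + apply Permutation_refl.
    + right; split; [apply concat_nil_map|auto].
Qed.

Lemma tjs_SE x y : (forall G s n, tj G y s n -> exists G' n', tj G' x s n') ->
  forall A G n, tjs G y A n -> exists G' n', tjs G' x A n'.
Proof.
  intros HS A; induction A as [|s A IH]; intros G n H.
  - exists cempty, 0; constructor.
  - apply tjs_cons_inv in H as (G1&G2&n1&n2&H1&H2&_&_).
    destruct (HS _ _ _ H1) as (G1'&n1'&T1). destruct (IH _ _ H2) as (G2'&n2'&T2).
    exists (cadd G1' G2'), (n1'+n2'); eapply tjs_cons; eauto; apply ceq_refl.
Qed.

Lemma se_h : forall H, hfree H -> forall x y, (forall G s n, tj G y s n -> exists G' n', tj G' x s n') ->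
  forall G s n, tj G (fill H y) s n -> exists G' n', tj G' (fill H x) s n'.
Proof.
  induction H as [|H IH b r|a b H IH]; intros HF x y HS G s n T; simpl in *.
  - eauto.
  - apply inv_app in T as (G1&G2&G3&A&B&n1&n2&n3&H1&H2&H3&Ok&_&_).
    destruct (tjs_SE _ _ (IH HF x y HS) _ _ _ H1) as (G1'&n1'&T1).
    do 2 eexists. apply tj_app with (A:=A) (B:=B); eauto.
  - destruct HF as [Fa HF].
    apply inv_app in T as (G1&G2&G3&A&B&n1&n2&n3&H1&H2&H3&Ok&_&_).
    destruct (IH HF x y HS _ _ _ H3) as (G3'&n3'&T3).
    destruct (app_ok_ne _ _ _ Ok) as [_ NB].
    eapply app_free; eauto. eapply tjs_typable; eauto.
Qed.

Lemma ISN_typ : (forall t, ISN t -> typable t) /\ (forall t, NE t -> free_typ t) /\ (forall H, HOK H -> hfree H).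
Proof.
  apply ISN_mut.
  - intros x. exists (csing x TA), TA, 1; constructor.
  - intros t _ (G&s&n&T). exists (cdn G), (TArr (G 0) s), (S n). apply tj_lam; auto.
  - intros a b r _ Fa _ Tb _ (G&s&n&T). destruct (app_free _ _ _ _ _ _ Fa Tb T) as (G'&n'&T'). red; eauto.
  - intros H D s u r _ HF _ (G&s0&n&T) _ T1 _ T2.
    destruct (se_h _ HF (dredex D s u r) (dcontr D s u r) (fun G0 s1 n0 T0 => dbeta_root_SE D s u r G0 s1 n0 T0 T1 T2) _ _ _ T) as (G'&n'&T'). red; eauto.
  - intros x s; exists (csing x s), 1; constructor.
  - intros a b r _ Fa _ Tb _ Fr s. destruct (Fr s) as (G3&n3&T3). eapply app_free; eauto.
  - exact I.
  - intros H b r _ HF; exact HF.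
  - intros a b H _ Fa _ HF; split; auto.
Qed.

Inductive ISNb : term -> Prop :=
| isnb_var x : ISNb (Var x)
| isnb_lam t : ISNb t -> ISNb (Lam t)
| isnb_vapp x b r : ISNb b -> ISNb r -> ISNb (App (Var x) b r)
| isnb_beta s u r : ISNb (subst0 (subst0 u s) r) -> ISNb (Lam s) -> ISNb u -> ISNb (App (Lam s) u r)
| isnb_pi t u r u' r' : ISNb (App t u (App r (lift 1 0 u') (lift 1 1 r'))) -> ISNb (App (App t u r) u' r').

Lemma ISNb_typ t : ISNb t -> typable t.
Proof.
  induction 1.
  - exists (csing x TA), TA, 1; constructor.
  - destruct IHISNb as (G&s&n&T). exists (cdn G), (TArr (G 0) s), (S n). apply tj_lam; auto.
  - destruct IHISNb2 as (G&s&n&T).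
    assert (F : free_typ (Var x)) by (intros s'; exists (csing x s'), 1; constructor).
    destruct (app_free _ _ _ _ _ _ F IHISNb1 T) as (G'&n'&T'). red; eauto.
  - destruct IHISNb1 as (G&s0&n&T).
    assert (T' : tj G (subst0 (plug [] (subst0 (lift (length (@nil (term*term))) 0 u) s)) r) s0 n)
      by (simpl; rewrite lift_0; auto).
    destruct (dbeta_root_SE [] s u r G s0 n T' IHISNb2 IHISNb3) as (G'&n'&T''). red; eauto.
  - destruct IHISNb as (G&s0&n&T).
    destruct (pi_root_SE _ _ (pi_rule t u r u' r') _ _ _ T) as (G'&n'&T'). red; eauto.
Qed.
Definition sub1 (a t : term) : Prop :=
  t = Lam a \/ (exists u r, t = App a u r) \/ (exists x r, t = App x a r) \/ (exists x u, t = App x u a).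

Definition Rc (R : term -> term -> Prop) (a t : term) : Prop := R t a \/ sub1 a t.

Lemma cc_compat Rr s t a : sub1 s t -> ctx_closure Rr s a -> exists t', ctx_closure Rr t t' /\ sub1 a t'.
Proof.
  intros [->|[(u&r&->)|[(x&r&->)|(x&u&->)]]] Hs.
  - exists (Lam a); split; [apply cc_lam; auto|left; auto].
  - exists (App a u r); split; [apply cc_app1; auto|right; left; eauto].
  - exists (App x a r); split; [apply cc_app2; auto|right; right; left; eauto].
  - exists (App x u a); split; [apply cc_app3; auto|right; right; right; eauto].
Qed.

Lemma compat_rt (R : term -> term -> Prop) :
  (forall s t a, sub1 s t -> R s a -> exists t', R t t' /\ sub1 a t') ->
  forall s t, clos_refl_trans _ sub1 s t -> forall a, R s a -> exists t', R t t' /\ clos_refl_trans _ sub1 a t'.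
Proof.
  intros C s t H; induction H as [s t H|s|s m t H1 IH1 H2 IH2]; intros a Hs.
  - destruct (C _ _ _ H Hs) as (t'&?&?). exists t'; split; auto. apply rt_step; auto.
  - exists a; split; auto. apply rt_refl.
  - destruct (IH1 _ Hs) as (m'&Hm&Sm). destruct (IH2 _ Hm) as (t'&Ht&St).
    exists t'; split; auto. eapply rt_trans; eauto.
Qed.

Lemma acc_Rc (R : term -> term -> Prop) :
  (forall s t a, sub1 s t -> R s a -> exists t', R t t' /\ sub1 a t') ->
  forall t, Acc (fun a b => R b a) t -> forall s, clos_refl_trans _ sub1 s t -> Acc (Rc R) s.
Proof.
  intros C t Hacc; induction Hacc as [t _ IHt]; intros s; induction s as [x|s0 IH0|s1 IH1 s2 IH2 s3 IH3]; intros Hst;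
  constructor; intros a [Hs|Hsub].
  all: try (destruct (compat_rt R C _ _ Hst _ Hs) as (t'&Ht'&St'); eapply IHt; eauto).
  all: destruct Hsub as [E|[(u&r&E)|[(y&r&E)|(y&u&E)]]]; try discriminate; injection E; intros; subst.
  all: match goal with |- Acc _ ?a => match goal with IH : clos_refl_trans _ _ a _ -> Acc _ a |- _ => apply IH end end.
  all: eapply rt_trans; [apply rt_step|exact Hst].
  all: unfold sub1; eauto 7.
Qed.

Lemma acc_sn R t : Acc (fun a b => R b a) t -> SN R t.
Proof.
  intros Hacc [f [H0 Hf]].
  assert (K : forall x, Acc (fun a b => R b a) x -> forall k, f k = x -> False).
  { intros x Hx; induction Hx as [x _ IH]; intros k Ek. apply (IH (f (S k))) with (k := S k); [rewrite <- Ek; apply Hf|reflexivity]. }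
  exact (K t Hacc 0 H0).
Qed.

Lemma sn_acc R t : SN R t -> Acc (fun a b => R b a) t.
Proof.
  intros HSN. destruct (classic (Acc (fun a b => R b a) t)) as [HA|HA]; auto. exfalso; apply HSN.
  assert (Step : forall x, ~ Acc (fun a b => R b a) x -> exists y, R x y /\ ~ Acc (fun a b => R b a) y).
  { intros x Hx. apply NNPP. intro Hn. apply Hx. constructor. intros y Hy.
    apply NNPP. intro Hy'. apply Hn. eauto. }
  set (P := fun x => ~ Acc (fun a b => R b a) x).
  assert (g : forall p : {x | P x}, {y | R (proj1_sig p) y /\ P y}).
  { intros [x Hx]. apply constructive_indefinite_description. apply Step; auto. }
  set (h := fun p : {x | P x} => exist P (proj1_sig (g p)) (proj2 (proj2_sig (g p)))).
  set (f := fun n => proj1_sig (Nat.iter n h (exist P t HA))).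
  exists f; split; [reflexivity|]. intro n. unfold f. simpl. unfold h at 1. simpl.
  exact (proj1 (proj2_sig (g _))).
Qed.
Lemma fill_step Rr H x y : ctx_closure Rr x y -> ctx_closure Rr (fill H x) (fill H y).
Proof. intros Hs; induction H; simpl; auto; [apply cc_app1|apply cc_app3]; auto. Qed.

Lemma fill_rt H x : clos_refl_trans _ sub1 x (fill H x).
Proof.
  induction H as [|H IH b r|a b H IH]; simpl.
  - apply rt_refl.
  - eapply rt_trans; [exact IH|]. apply rt_step. right; left; eauto.
  - eapply rt_trans; [exact IH|]. apply rt_step. right; right; right; eauto.
Qed.

Lemma st_rt a b c : clos_trans _ sub1 a b -> clos_refl_trans _ sub1 b c -> clos_trans _ sub1 a c.
Proof.
  intros H1 H2; revert a H1; induction H2 as [b c H|b|b m c _ IH1 _ IH2]; intros a H1.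
  - eapply t_trans; [exact H1|apply t_step; auto].
  - auto.
  - apply IH2, IH1, H1.
Qed.

Lemma ct_mono R a b : clos_trans _ sub1 a b -> clos_trans _ (Rc R) a b.
Proof. induction 1; [apply t_step; right; auto|eapply t_trans; eauto]. Qed.

Lemma DL : forall a, (forall s, clos_trans _ sub1 s a -> ISN s) ->
  (exists D s, a = plug D (Lam s)) \/ NE a \/ (exists H D s u r, HOK H /\ a = fill H (dredex D s u r)).
Proof.
  induction a as [x|s IH|a1 IH1 b1 IH2 r1 IH3]; intros Hs.
  - right; left; constructor.
  - left; exists [], s; reflexivity.
  - assert (S1 : forall s, clos_trans _ sub1 s a1 -> ISN s)
      by (intros s Hs'; apply Hs; eapply t_trans; [exact Hs'|apply t_step; right; left; eauto]).
    assert (S3 : forall s, clos_trans _ sub1 s r1 -> ISN s)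
      by (intros s Hs'; apply Hs; eapply t_trans; [exact Hs'|apply t_step; right; right; right; eauto]).
    destruct (IH1 S1) as [(D&s&->)|[N1|(H&D&s&u&r&HH&->)]].
    + right; right. exists Hole, D, s, b1, r1; split; [constructor|reflexivity].
    + destruct (IH3 S3) as [(D&s&->)|[N3|(H&D&s&u&r&HH&->)]].
      * left. exists ((a1,b1)::D), s; reflexivity.
      * right; left. constructor; auto. apply Hs. apply t_step; right; right; left; eauto.
      * right; right. exists (HR a1 b1 H), D, s, u, r; split; [constructor; auto|reflexivity].
    + right; right. exists (HL H b1 r1), D, s, u, r; split; [constructor; auto|reflexivity].
Qed.

Lemma isn_complete : forall t, Acc (clos_trans _ (Rc dbeta_step)) t -> ISN t.
Proof.
  intros t Hacc; induction Hacc as [t _ IH].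
  assert (Sub : forall s, clos_trans _ sub1 s t -> ISN s) by (intros s Hs; apply IH, ct_mono, Hs).
  assert (Red : forall s, dbeta_step t s -> ISN s) by (intros s Hs; apply IH, t_step; left; auto).
  destruct t as [x|a|a b r].
  - constructor.
  - constructor. apply Sub, t_step. left; auto.
  - assert (Sa : forall s, clos_trans _ sub1 s a -> ISN s)
      by (intros s Hs; apply Sub; eapply t_trans; [exact Hs|apply t_step; right; left; eauto]).
    assert (Sb : ISN b) by (apply Sub, t_step; right; right; left; eauto).
    assert (Sr : ISN r) by (apply Sub, t_step; right; right; right; eauto).
    destruct (DL a Sa) as [(D&s&->)|[Hne|(H&D&s&u&r0&HH&->)]].
    + change (App (plug D (Lam s)) b r) with (fill Hole (dredex D s b r)).
      apply isn_h; [constructor| | |auto].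
      * apply Red. simpl. unfold dcontr. apply cc_root. apply dbeta_rule.
      * apply Sub, t_step; right; left; eauto.
    + apply isn_ne; auto.
    + change (App (fill H (dredex D s u r0)) b r) with (fill (HL H b r) (dredex D s u r0)).
      apply isn_h; [constructor; auto| | |].
      * apply Red. apply (fill_step _ (HL H b r)). unfold dredex, dcontr. apply cc_root. apply dbeta_rule.
      * apply Sa. eapply st_rt; [|apply fill_rt]. unfold dredex. apply t_step; right; left; eauto.
      * apply Sa. eapply st_rt; [|apply fill_rt]. unfold dredex. apply t_step; right; right; left; eauto.
Qed.

Lemma isnb_complete : forall t, Acc (clos_trans _ (Rc (union_rel beta_step pi_step))) t -> ISNb t.
Proof.
  intros t Hacc; induction Hacc as [t _ IH].
  assert (Sub : forall s, clos_trans _ sub1 s t -> ISNb s) by (intros s Hs; apply IH, ct_mono, Hs).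
  assert (Red : forall s, union_rel beta_step pi_step t s -> ISNb s) by (intros s Hs; apply IH, t_step; left; auto).
  destruct t as [x|a|a b r].
  - constructor.
  - constructor. apply Sub, t_step. left; auto.
  - assert (Sb : ISNb b) by (apply Sub, t_step; right; right; left; eauto).
    assert (Sr : ISNb r) by (apply Sub, t_step; right; right; right; eauto).
    destruct a as [x|s|t0 u0 r0].
    + constructor; auto.
    + apply isnb_beta; auto.
      * apply Red. left. apply cc_root. apply beta_rule.
      * apply Sub, t_step; right; left; eauto.
    + apply isnb_pi. apply Red. right. apply cc_root. apply pi_rule.
Qed.

Lemma union_compat s t a : sub1 s t -> union_rel beta_step pi_step s a ->
  exists t', union_rel beta_step pi_step t t' /\ sub1 a t'.
Proof.
  intros H [Hs|Hs].
  - destruct (cc_compat _ _ _ _ H Hs) as (t'&?&?). exists t'; split; auto. left; auto.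
  - destruct (cc_compat _ _ _ _ H Hs) as (t'&?&?). exists t'; split; auto. right; auto.
Qed.

Theorem mainTheorem20 : forall t : term,
  SN dbeta_step t <-> SN (union_rel beta_step pi_step) t.
Proof.
  intros t; split; intros H.
  - apply sn_acc in H.
    pose proof (acc_Rc dbeta_step (fun s t a => cc_compat dbeta_root s t a) t H t (rt_refl _ _ _)) as H1.
    apply Acc_clos_trans, isn_complete, (proj1 ISN_typ) in H1 as (G&s&n&T).
    apply acc_sn. eapply typ_acc_bp; eauto.
  - apply sn_acc in H.
    pose proof (acc_Rc _ union_compat t H t (rt_refl _ _ _)) as H1.
    apply Acc_clos_trans, isnb_complete, ISNb_typ in H1 as (G&s&n&T).
    apply acc_sn. eapply typ_acc_d; eauto.
Qed.
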